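(* Let $G$ be a proper interval graph with a proper vertex ordering $<$ and let $M$ be a uniquely restricted matching in $G$ starting with an edge $e'\in E(G)$. Let $e\in E(G)$ be such that $r(e)<l(e')$ and $\{e,e'\}$ is a uniquely restricted matching in $G$. Then $\{e\}\cup M$ is a uniquely restricted matching in $G$ starting with $e$.
   Context: Graphs are finite, simple, undirected. A proper interval graph is a graph with an interval representation (closed real intervals, adjacency iff intersection for distinct vertices) in which no interval strictly contains another. An ordering $<$ of $V(G)$ is a proper vertex ordering if for all $u<v<w$, $uw\in E(G)$ implies $uv,vw\in E(G)$. For an edge $e=uv$, $l(e)=\min_<\{u,v\}$ and $r(e)=\max_<\{u,v\}$. A matching is a set of pairwise vertex-disjoint edges; it is uniquely restricted if no other matching of $G$ matches exactly the same vertex set. For a uniquely restricted matching $M$ in such $G$, its edges can be labelled $e_1,\dots,e_{|M|}$ with $l(e_1)<r(e_1)<l(e_2)<r(e_2)<\cdots<l(e_{|M|})<r(e_{|M|})$, and $M$ is said to start with $e_1$ (the edge of $M$ with the $<$-smallest $l$-value). *)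

(* Defs.v *)
From Stdlib Require Import Reals.
From mathcomp Require Import all_boot.
Set Implicit Arguments. Unset Strict Implicit. Unset Printing Implicit Defensive.

Section Defs.
Variable T : finType.

Definition simple_graph (G : rel T) : Prop :=
  (forall u v, G u v = G v u) /\ (forall u, ~~ G u u).

Definition proper_interval_graph (G : rel T) : Prop :=
  exists (a b : T -> R),
    (forall v, Rle (a v) (b v)) /\
    (forall u v, u <> v ->
       (G u v <-> exists x : R, (Rle (a u) x /\ Rle x (b u)) /\ (Rle (a v) x /\ Rle x (b v)))) /\
    (forall u v, ~ ((forall x : R, (Rle (a u) x /\ Rle x (b u)) -> (Rle (a v) x /\ Rle x (b v))) /\
                    exists x : R, (Rle (a v) x /\ Rle x (b v)) /\ ~ (Rle (a u) x /\ Rle x (b u)))).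

(* A linear ordering of V(G) is given by an injective rank function pos;
   u < v iff pos u < pos v. *)
Definition proper_vertex_ordering (G : rel T) (pos : T -> nat) : Prop :=
  injective pos /\
  forall u v w, pos u < pos v -> pos v < pos w -> G u w -> G u v /\ G v w.

Definition is_edge (G : rel T) (f : {set T}) : Prop :=
  exists u v, G u v /\ f = [set u; v].

Definition matching (G : rel T) (M : {set {set T}}) : Prop :=
  (forall f, f \in M -> is_edge G f) /\
  (forall f g, f \in M -> g \in M -> f != g -> [disjoint f & g]).

Definition uniquely_restricted (G : rel T) (M : {set {set T}}) : Prop :=
  matching G M /\
  forall M', matching G M' -> cover M' = cover M -> M' = M.

(* l(f) <= l(g) for all g in M, with f in M (l = pos-minimal endpoint). *)
Definition starts_with (pos : T -> nat) (M : {set {set T}}) (f : {set T}) : Prop :=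
  f \in M /\
  forall g, g \in M -> forall y, y \in g -> exists2 x, x \in f & pos x <= pos y.

(* r(f) < l(g): every endpoint of f precedes every endpoint of g. *)
Definition edge_before (pos : T -> nat) (f g : {set T}) : Prop :=
  forall x y, x \in f -> y \in g -> pos x < pos y.

End Defs.

(* Main.v *)
Require Import Defs.
From Stdlib Require Import Reals.
From mathcomp Require Import all_boot.
From mathcomp Require Import zify.
Set Implicit Arguments. Unset Strict Implicit. Unset Printing Implicit Defensive.

Lemma coverP' (T : finType) (P : {set {set T}}) x :
  reflect (exists2 B, B \in P & x \in B) (x \in cover P).
Proof. rewrite /cover; exact: bigcupP. Qed.

Lemma disj_contra (T : finType) (f g : {set T}) x :
  [disjoint f & g] -> x \in f -> x \in g -> False.
Proof. move=> H xf; by rewrite (disjointFr H xf). Qed.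

Lemma disj_intro (T : finType) (f g : {set T}) :
  (forall x, x \in f -> x \in g -> False) -> [disjoint f & g].
Proof.
move=> H; rewrite disjoint_subset; apply/subsetP => x xf; rewrite inE.
by apply/negP => xg; apply: (H x).
Qed.

Lemma edge_pick (T : finType) (G : rel T) f x :
  simple_graph G -> is_edge G f -> x \in f -> exists y, G x y /\ f = [set x; y].
Proof.
move=> [Hsym _] [p [q [Gpq ->]]]; case/set2P => ->.
- by exists q.
- by exists p; rewrite setUC Hsym.
Qed.

Lemma swap_ur (T : finType) (G : rel T) (M : {set {set T}}) a b c d :
  simple_graph G -> uniquely_restricted G M ->
  [set a; b] \in M -> [set c; d] \in M -> [set a; b] != [set c; d] ->
  G a b -> G c d -> G a c -> G b d -> False.
Proof.
move=> [Hsym Hirr] [[Medge Mdisj] MUR] f1M f2M f12 Gab Gcd Gac Gbd.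
have D12 := Mdisj _ _ f1M f2M f12.
have nab : a != b by apply/eqP => eab; move: Gab; rewrite eab (negbTE (Hirr b)).
have ncd : c != d by apply/eqP => ecd; move: Gcd; rewrite ecd (negbTE (Hirr d)).
have cf1 : c \notin [set a; b] by apply/negP => h; apply: (disj_contra D12 h); rewrite !inE eqxx.
have df1 : d \notin [set a; b] by apply/negP => h; apply: (disj_contra D12 h); rewrite !inE eqxx orbT.
have af2 : a \notin [set c; d] by apply/negP => h; apply: (disj_contra D12 _ h); rewrite !inE eqxx.
have bf2 : b \notin [set c; d] by apply/negP => h; apply: (disj_contra D12 _ h); rewrite !inE eqxx orbT.
set M2 := [set a; c] |: ([set b; d] |: ((M :\ [set a; b]) :\ [set c; d])).
have M2P : forall f, f \in M2 ->
   [\/ f = [set a; c], f = [set b; d] | [/\ f \in M, f != [set a; b] & f != [set c; d]]].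
{ move=> f; rewrite !in_setU1 !in_setD1 => /orP [/eqP->|/orP [/eqP->|/and3P [h1 h2 h3]]].
  - by constructor 1.
  - by constructor 2.
  - by constructor 3. }
have oldD : forall h x, h \in M -> h != [set a; b] -> h != [set c; d] -> x \in h ->
    x \in [set a; b] \/ x \in [set c; d] -> False.
{ move=> h x hM h1 h2 xh [xin|xin].
  - exact: (disj_contra (Mdisj _ _ hM f1M h1) xh xin).
  - exact: (disj_contra (Mdisj _ _ hM f2M h2) xh xin). }
have acbd : forall x, x \in [set a; c] -> x \in [set b; d] -> False.
{ move=> x; rewrite !inE => /orP [/eqP->|/eqP->] /orP [/eqP e|/eqP e] //.
  - by move: nab; rewrite e eqxx.
  - by move: df1; rewrite -e !inE eqxx.
  - by move: cf1; rewrite e !inE eqxx orbT.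
  - by move: ncd; rewrite e eqxx. }
have ac12 : forall x, x \in [set a; c] -> x \in [set a; b] \/ x \in [set c; d].
{ move=> x; rewrite !inE => /orP [->|->]; [by left | by right]. }
have bd12 : forall x, x \in [set b; d] -> x \in [set a; b] \/ x \in [set c; d].
{ move=> x; rewrite !inE => /orP [->|->]; [by left; rewrite orbT | by right; rewrite orbT]. }
have M2m : matching G M2.
{ split.
  - move=> f /M2P [->|->|[fM _ _]].
    + by exists a, c.
    + by exists b, d.
    + exact: Medge.
  - move=> f g fM2 gM2 fg; apply: disj_intro => x xf xg.
    case: (M2P _ fM2) fg xf => [->|->|[fM f1 f2]] fg xf;
    case: (M2P _ gM2) fg xg => [->|->|[gM g1 g2]] fg xg.
    + by rewrite eqxx in fg.
    + exact: acbd xf xg.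
    + exact: (oldD _ _ gM g1 g2 xg (ac12 _ xf)).
    + exact: acbd xg xf.
    + by rewrite eqxx in fg.
    + exact: (oldD _ _ gM g1 g2 xg (bd12 _ xf)).
    + exact: (oldD _ _ fM f1 f2 xf (ac12 _ xg)).
    + exact: (oldD _ _ fM f1 f2 xf (bd12 _ xg)).
    + exact: (disj_contra (Mdisj _ _ fM gM fg) xf xg). }
have M2c : cover M2 = cover M.
{ apply/setP => x; apply/coverP'/coverP'.
  - case=> f /M2P [->|->|[fM _ _]] xf.
    + by case: (ac12 _ xf) => h; [exists [set a; b] | exists [set c; d]].
    + by case: (bd12 _ xf) => h; [exists [set a; b] | exists [set c; d]].
    + by exists f.
  - case=> f fM xf.
    have ac2 : [set a; c] \in M2 by rewrite /M2 setU11.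
    have bd2 : [set b; d] \in M2 by rewrite /M2 setU1r // setU11.
    case: (eqVneq f [set a; b]) => [ef|nf1].
      by move: xf; rewrite ef !inE => /orP [/eqP->|/eqP->];
        [exists [set a; c] => //; rewrite !inE eqxx | exists [set b; d] => //; rewrite !inE eqxx].
    case: (eqVneq f [set c; d]) => [ef|nf2].
      by move: xf; rewrite ef !inE => /orP [/eqP->|/eqP->];
        [exists [set a; c] => //; rewrite !inE eqxx orbT | exists [set b; d] => //; rewrite !inE eqxx orbT].
    exists f => //; rewrite /M2 !in_setU1 !in_setD1 nf1 nf2 fM.
    by rewrite !orbT. }
have eM := MUR _ M2m M2c.
have acM : [set a; c] \in M by rewrite -eM /M2 setU11.
have acf1 : [set a; c] != [set a; b].
{ apply/eqP => e; move: cf1; by rewrite -e !inE eqxx orbT. }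
apply: (disj_contra (Mdisj _ _ acM f1M acf1) (x := a)); by rewrite !inE eqxx.
Qed.

Lemma orient (T : finType) (G : rel T) (pos : T -> nat) f :
  simple_graph G -> injective pos -> is_edge G f ->
  exists u v, [/\ G u v, pos u < pos v & f = [set u; v]].
Proof.
move=> [Hsym Hirr] Hinj [p [q [Gpq ->]]].
have npq : pos p != pos q.
{ apply/eqP => /Hinj epq; move: Gpq; by rewrite epq (negbTE (Hirr q)). }
case: (ltngtP (pos p) (pos q)) => h.
- by exists p, q.
- by exists q, p; rewrite setUC Hsym.
- by rewrite h eqxx in npq.
Qed.

Theorem corollary1 (T : finType) (G : rel T) (pos : T -> nat)
  (M : {set {set T}}) (e e' : {set T}) :
  simple_graph G ->
  proper_interval_graph G ->
  proper_vertex_ordering G pos ->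
  uniquely_restricted G M ->
  starts_with pos M e' ->
  is_edge G e -> is_edge G e' ->
  edge_before pos e e' ->
  uniquely_restricted G [set e; e'] ->
  uniquely_restricted G (e |: M) /\ starts_with pos (e |: M) e.
Proof.
move=> Hsg _ [Hinj Hord] URM [e'M Hstart] Ee Ee' Hbef URee'.
have [Hsym Hirr] := Hsg.
have [[MedgeM MdisjM] MUR] := URM.
have [u [v [Guv Huv ee]]] := orient (pos := pos) Hsg Hinj Ee.
have [a [b [Gab Hab ee']]] := orient (pos := pos) Hsg Hinj Ee'.
subst e e'.
have hva : pos v < pos a by apply: Hbef; rewrite !inE eqxx ?orbT.
have hMa : forall y, y \in cover M -> pos a <= pos y.
{ move=> y /coverP' [g gM yg]; have [x] := Hstart g gM y yg.
  by rewrite !inE => /orP [/eqP->|/eqP->] h; lia. }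
have nuv : u != v by apply/eqP => h; move: Huv; rewrite h; lia.
have eqpos : forall x y, pos x = pos y -> x = y by move=> x y /Hinj.
have between : forall y, y \in cover M -> pos a < pos y -> pos y < pos b -> False.
{ move=> y /coverP' [g gM yg] h1 h2.
  have [d [Gyd eg]] := edge_pick Hsg (MedgeM _ gM) yg; subst g.
  have ne : [set a; b] != [set y; d].
  { apply/eqP => h; have : y \in [set a; b] by rewrite h !inE eqxx.
    by rewrite !inE => /orP [/eqP h3|/eqP h3]; subst y; lia. }
  have Dg := MdisjM _ _ e'M gM ne.
  have dy : d \in cover M by apply/coverP'; exists [set y; d] => //; rewrite !inE eqxx orbT.
  have hd := hMa _ dy.
  have da : d != a.
  { apply/eqP => h; apply: (disj_contra Dg (x := d)).
    - by rewrite h !inE eqxx.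
    - by rewrite !inE eqxx orbT. }
  have db : d != b.
  { apply/eqP => h; apply: (disj_contra Dg (x := d)).
    - by rewrite h !inE eqxx orbT.
    - by rewrite !inE eqxx orbT. }
  have [Gay Gyb] := Hord _ _ _ h1 h2 Gab.
  have Gbd : G b d.
  { case: (ltngtP (pos d) (pos b)) => hdb.
    - have had : pos a < pos d.
      { case: (ltngtP (pos a) (pos d)) => // h; first by rewrite leqNgt h in hd.
        by move: da; rewrite (eqpos _ _ (esym h)) eqxx. }
      by have [_ ] := Hord _ _ _ had hdb Gab; rewrite Hsym.
    - by have [_ ] := Hord _ _ _ h2 hdb Gyd.
    - by move: db; rewrite (eqpos _ _ hdb) eqxx. }
  exact: (swap_ur Hsg URM e'M gM ne Gab Gyd Gay Gbd). }
have uae : [set u; v] \in [set [set u; v]; [set a; b]] by rewrite !inE eqxx.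
have bae : [set a; b] \in [set [set u; v]; [set a; b]] by rewrite !inE eqxx orbT.
have ne' : [set u; v] != [set a; b].
{ apply/eqP => h; have : u \in [set a; b] by rewrite -h !inE eqxx.
  rewrite !inE => /orP [/eqP h3|/eqP h3]; subst u.
  - by move: (ltn_trans Huv hva); rewrite ltnn.
  - by move: (ltn_trans (ltn_trans Huv hva) Hab); rewrite ltnn. }
have noab : ~ (G u a /\ G v b).
{ case=> h1 h2; exact: (swap_ur Hsg URee' uae bae ne' Guv Gab h1 h2). }
have noba : ~ (G u b /\ G v a).
{ case=> h1 h2.
  have bae2 : [set b; a] \in [set [set u; v]; [set a; b]] by rewrite [[set b; a]]setUC.
  have ne2 : [set u; v] != [set b; a] by rewrite [[set b; a]]setUC.
  have Gba : G b a by rewrite Hsym.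
  exact: (swap_ur Hsg URee' uae bae2 ne2 Guv Gba h1 h2). }
have hMv : forall y, y \in cover M -> pos v < pos y.
{ move=> y /hMa h; exact: (leq_trans hva h). }
have eoff : forall x, x \in [set u; v] -> x \in cover M -> False.
{ move=> x; rewrite !inE => /orP [/eqP->|/eqP->] /hMv h.
  - by move: (ltn_trans Huv h); rewrite ltnn.
  - by move: h; rewrite ltnn. }
have isa : forall t, t \in cover M -> pos t < pos b -> t = a.
{ move=> t tM htb; have hat := hMa _ tM.
  case: (ltngtP (pos a) (pos t)) => h.
  - by case: (between _ tM h htb).
  - by rewrite leqNgt h in hat.
  - exact: eqpos. }
have toB : forall s t, pos s < pos b -> G s t -> t \in cover M -> ~~ (pos t < pos b) -> G s b.
{ move=> s t hsb Gst tM; rewrite -leqNgt => hbt.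
  case: (ltngtP (pos b) (pos t)) => h.
  - by have [] := Hord _ _ _ hsb h Gst.
  - by rewrite ltnNge hbt in h.
  - by rewrite (eqpos _ _ h). }
have hub : pos u < pos b by apply: (ltn_trans Huv); apply: (ltn_trans hva).
have hvb : pos v < pos b by apply: (ltn_trans hva).
have hua : pos u < pos a by apply: (ltn_trans Huv).
split; last first.
{ split; first by rewrite setU11.
  move=> g; rewrite in_setU1 => /orP [/eqP-> | gM] y yg.
  - by exists y.
  - exists u; first by rewrite !inE eqxx.
    have yM : y \in cover M by apply/coverP'; exists g.
    exact: ltnW (leq_trans hua (hMa _ yM)). }
have Mm : matching G ([set u; v] |: M).
{ split.
  - move=> f; rewrite in_setU1 => /orP [/eqP-> | fM]; last exact: MedgeM.
    by exists u, v.
  - have key : forall g, g \in M -> [disjoint [set u; v] & g].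
    { move=> g gM; apply: disj_intro => x xe xg; apply: (eoff x xe).
      by apply/coverP'; exists g. }
    move=> f g; rewrite !in_setU1 => /orP [/eqP-> | fM] /orP [/eqP-> | gM] fg.
    + by rewrite eqxx in fg.
    + exact: key.
    + by rewrite disjoint_sym; apply: key.
    + exact: MdisjM. }
split => //.
move=> M' [M'edge M'disj] cov.
have inc : forall x, x \in cover M' -> x \in [set u; v] \/ x \in cover M.
{ move=> x; rewrite cov => /coverP' [g] /setU1P [-> | gM] xg.
  - by left.
  - by right; apply/coverP'; exists g. }
have inc2 : forall x, x \in cover M -> x \in cover M'.
{ move=> x /coverP' [g gM xg]; rewrite cov; apply/coverP'; exists g => //.
  by rewrite in_setU1 gM orbT. }
have uM' : u \in cover M' by rewrite cov; apply/coverP'; exists [set u; v]; rewrite ?setU11 // !inE eqxx.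
have vM' : v \in cover M' by rewrite cov; apply/coverP'; exists [set u; v]; rewrite ?setU11 // !inE eqxx orbT.
have /coverP' [h hM' uh] := uM'.
have [w [Guw eh]] := edge_pick Hsg (M'edge _ hM') uh; subst h.
have ew : w = v.
{ case: (eqVneq w v) => // nwv.
  have wM : w \in cover M.
  { have wM' : w \in cover M' by apply/coverP'; exists [set u; w]; rewrite // !inE eqxx orbT.
    case: (inc _ wM') => [|//]; rewrite !inE; case/orP => [/eqP ewu|/eqP ewv].
    - by move: Guw; rewrite ewu (negbTE (Hirr u)).
    - by rewrite ewv eqxx in nwv. }
  have wb : pos w < pos b.
  { apply/negPn/negP => nb; have Gub := toB _ _ hub Guw wM nb.
    have [_ Gvb] := Hord _ _ _ Huv hvb Gub.
    have [Gua _] := Hord _ _ _ hua Hab Gub.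
    exact: noab. }
  have ewa := isa _ wM wb; subst w.
  have /coverP' [h2 h2M' vh2] := vM'.
  have [z [Gvz eh2]] := edge_pick Hsg (M'edge _ h2M') vh2; subst h2.
  have zM : z \in cover M.
  { have zM' : z \in cover M' by apply/coverP'; exists [set v; z]; rewrite // !inE eqxx orbT.
    case: (inc _ zM') => [|//]; rewrite !inE; case/orP => [/eqP ezu|/eqP ezv].
    - subst z. exfalso.
      case: (eqVneq [set u; a] [set v; u]) => [E|NE].
      + have : v \in [set u; a] by rewrite E !inE eqxx.
        rewrite !inE => /orP [/eqP E2|/eqP E2].
        * by rewrite E2 eqxx in nuv.
        * by rewrite E2 ltnn in hva.
      + apply: (disj_contra (M'disj _ _ hM' h2M' NE) (x := u)); by rewrite !inE eqxx ?orbT.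
    - by move: Gvz; rewrite ezv (negbTE (Hirr v)). }
  have zb : pos z < pos b.
  { apply/negPn/negP => nb; have Gvb := toB _ _ hvb Gvz zM nb.
    exact: noab (conj Guw Gvb). }
  have eza := isa _ zM zb; subst z.
  have NE : [set u; a] != [set v; a].
  { apply/eqP => E; have : v \in [set u; a] by rewrite E !inE eqxx.
    rewrite !inE => /orP [/eqP E2|/eqP E2].
    - by rewrite E2 eqxx in nuv.
    - by rewrite E2 ltnn in hva. }
  exfalso; apply: (disj_contra (M'disj _ _ hM' h2M' NE) (x := a)); by rewrite !inE eqxx orbT. }
subst w.
have M''m : matching G (M' :\ [set u; v]).
{ split.
  - by move=> f; rewrite in_setD1 => /andP [_ /M'edge].
  - move=> f g; rewrite !in_setD1 => /andP [_ fM] /andP [_ gM]; exact: M'disj. }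
have M''c : cover (M' :\ [set u; v]) = cover M.
{ apply/setP => x; apply/coverP'/idP.
  - case=> g; rewrite in_setD1 => /andP [ng gM] xg.
    have xM' : x \in cover M' by apply/coverP'; exists g.
    case: (inc _ xM') => // xe.
    by case: (disj_contra (M'disj _ _ gM hM' ng) xg xe).
  - move=> xM; have /coverP' [g gM xg] := inc2 _ xM.
    exists g => //; rewrite in_setD1 gM andbT.
    apply/eqP => E; subst g; exact: (eoff _ xg xM). }
have E := MUR _ M''m M''c.
by rewrite -E setD1K.
Qed.
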